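(* For a commutative ring $R$ with identity, the following are equivalent: (1) $R$ has a unique prime ideal; (2) $R\setminus\mathfrak{N}(R)=U(R)$; (3) $R\propto M$ is semi-complemented for every $R$-module $M$.
   Context: $\mathfrak{N}(R)$ is the nilradical, $U(R)$ the group of units, $\mathrm{reg}(A)$ the regular elements of a ring $A$. The trivial extension $R\propto M$ is $R\times M$ with coordinatewise addition and $(r,m)(s,n)=(rs,rn+sm)$. A ring $A$ is semi-complemented if for every $x\in A\setminus\mathfrak{N}(A)$ there is $y$ with $xy=0$ and $x+y\in\mathrm{reg}(A)$. *)

(* Defs.v *)
From HB Require Import structures.
From mathcomp Require Import all_boot all_order all_algebra.
Set Implicit Arguments.
Unset Strict Implicit.
Unset Printing Implicit Defensive.
Import Order.TTheory GRing.Theory Num.Theory.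
Local Open Scope ring_scope.

(* Subsets of a ring are Prop-valued predicates (no decidability assumed). *)

Definition nilpotent_elt (A : comNzRingType) (x : A) : Prop :=
  exists n : nat, x ^+ n = 0.

Definition unit_elt (A : comNzRingType) (x : A) : Prop :=
  exists y : A, x * y = 1.

Definition regular_elt (A : comNzRingType) (x : A) : Prop :=
  forall y : A, x * y = 0 -> y = 0.

Definition is_ideal (A : comNzRingType) (P : A -> Prop) : Prop :=
  [/\ P 0,
      (forall u v, P u -> P v -> P (u + v)) &
      (forall a u, P u -> P (a * u))].

Definition is_prime_ideal (A : comNzRingType) (P : A -> Prop) : Prop :=
  [/\ is_ideal P, ~ P 1 & (forall u v, P (u * v) -> P u \/ P v)].

Definition unique_prime_ideal (A : comNzRingType) : Prop :=
  exists P : A -> Prop, is_prime_ideal P /\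
    forall Q : A -> Prop, is_prime_ideal Q -> forall x, Q x <-> P x.

Definition semi_complemented (A : comNzRingType) : Prop :=
  forall x : A, ~ nilpotent_elt x ->
    exists y : A, x * y = 0 /\ regular_elt (x + y).

Section TrivExt.
Variables (R : comNzRingType) (M : lmodType R).

Definition triv_ext : Type := (R * M)%type.

HB.instance Definition _ := GRing.Zmodule.on triv_ext.

Definition te_one : triv_ext := (1, 0).
Definition te_mul (a b : triv_ext) : triv_ext :=
  (a.1 * b.1, a.1 *: b.2 + b.1 *: a.2).

Lemma te_mulA : associative te_mul.
Proof.
move=> [r m] [s n] [t p]; rewrite /te_mul /=; congr (_, _); first by rewrite mulrA.
rewrite !scalerDr !scalerA addrA; congr (_ + _); first by rewrite (mulrC t r).
by rewrite mulrC.
Qed.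

Lemma te_mulC : commutative te_mul.
Proof. by move=> [r m] [s n]; rewrite /te_mul /= mulrC addrC. Qed.

Lemma te_mul1 : left_id te_one te_mul.
Proof. by move=> [r m]; rewrite /te_mul /= mul1r scale1r scaler0 addr0. Qed.

Lemma te_mulDl : left_distributive te_mul +%R.
Proof.
move=> [r m] [s n] [t p]; rewrite /te_mul /= mulrDl scalerDl scalerDr.
by congr (_, _); rewrite -!addrA; congr (_ + _); rewrite addrCA.
Qed.

Lemma te_one_neq0 : te_one != 0.
Proof. by apply/negP => /eqP [] /eqP; rewrite oner_eq0. Qed.

HB.instance Definition _ := GRing.Zmodule_isComNzRing.Build triv_ext
  te_mulA te_mulC te_mul1 te_mulDl te_one_neq0.

End TrivExt.

Notation "R ∝ M" := (@triv_ext R M) (at level 40).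

(* Main.v *)
From HB Require Import structures.
Require Import Defs.
From mathcomp Require Import all_boot all_order all_algebra.
From mathcomp Require Import boolp classical_sets.
From mathcomp Require Import ring.
Import GRing.Theory.
Set Implicit Arguments.
Unset Strict Implicit.
Local Open Scope ring_scope.
Local Open Scope quotient_scope.

Lemma nilD (R : comNzRingType) (u v : R) a b :
  u ^+ a = 0 -> v ^+ b = 0 -> (u + v) ^+ (a + b) = 0.
Proof.
move=> ua vb; rewrite exprDn big1 // => [[i /= hi]] _.
case: (leqP b i) => hb.
  by rewrite -(subnKC hb) exprD vb mul0r mulr0 mul0rn.
have ha : (a <= a + b - i)%N by rewrite -addnBA ?leq_addr // ltnW.
by rewrite -(subnKC ha) exprD ua !mul0r mul0rn.
Qed.

Lemma unit_not_nil (R : comNzRingType) (x : R) : unit_elt x -> ~ nilpotent_elt x.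
Proof.
move=> [y xy] [n xn]; have := congr1 (fun z => z ^+ n) xy.
by rewrite /= exprMn xn mul0r expr1n => /eqP; rewrite eq_sym oner_eq0.
Qed.

Lemma unitM (R : comNzRingType) (x y : R) : unit_elt x -> unit_elt y -> unit_elt (x * y).
Proof.
move=> [a xa] [b yb]; exists (a * b).
by rewrite mulrACA xa yb mulr1.
Qed.
Section Zprime.
Context (R : comNzRingType) (S J : R -> Prop).
Hypotheses (S1 : S 1) (SM : forall a b, S a -> S b -> S (a * b))
  (Jid : is_ideal J) (JS : forall a, J a -> ~ S a).

Definition good (X : R -> Prop) :=
  [/\ is_ideal X, (forall a, J a -> X a) & (forall a, X a -> ~ S a)].

Definition PP (X : set R) := X = set0 \/ good X.

Lemma PP_good X z : PP X -> X z -> good X.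
Proof. by case=> // ->. Qed.
Arguments PP_good {X z}.

Lemma exists_prime_avoid :
  exists Q, [/\ is_prime_ideal Q, (forall a, J a -> Q a) & (forall a, Q a -> ~ S a)].
Proof.
have [A [PA Amax]] : exists A : set R, PP A /\ forall B, (A `<` B)%classic -> ~ PP B.
  apply: Zorn_bigcup => F FP Ftot.
  have [[X0 [FX0 gX0]]|nog] := pselect (exists X, F X /\ good X); last first.
    left; apply/seteqP; split => // z [X FX Xz].
    by apply: nog; exists X; split => //; apply: PP_good (FP _ FX) Xz.
  right; case: gX0 => [[X00 _ _] JX0 _]; split.
  - split.
    + by exists X0.
    + move=> u v [X1 F1 u1] [X2 F2 v2].
      have [s12|s21] := Ftot _ _ F1 F2.
      * exists X2 => //; case: (PP_good (FP _ F2) v2) => [[_ D _] _ _].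
        by apply: D => //; apply: s12.
      * exists X1 => //; case: (PP_good (FP _ F1) u1) => [[_ D _] _ _].
        by apply: D => //; apply: s21.
    + move=> a u [X1 F1 u1]; exists X1 => //.
      by case: (PP_good (FP _ F1) u1) => [[_ _ M] _ _]; apply: M.
  - by move=> a Ja; exists X0 => //; apply: JX0.
  - by move=> a [X1 F1 u1]; case: (PP_good (FP _ F1) u1) => _ _; apply.
have gA : good A.
  case: PA => // A0; exfalso; apply: (Amax J); last by right.
  rewrite A0; split => //; case: Jid => J0 _ _ /(_ 0 J0) //.
case: gA => Aid JA AS; have [A0 AD AM] := Aid.
exists A; split => //; split => //.
  by move=> /AS; apply.
move=> u v Auv; apply: contrapT => /not_orP [nu nv].
have meet w : ~ A w -> exists s, S s /\ exists a r, A a /\ s = a + w * r.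
  move=> nw; pose B z := exists a r, A a /\ z = a + w * r.
  have gB : ~ good B.
    move=> gB; apply: (Amax B); last by right.
    split.
      by move=> z Az; exists z, 0; rewrite mulr0 addr0.
    move=> BA; apply: nw; apply: BA; exists 0, 1; split => //; by rewrite add0r mulr1.
  apply: contrapT => ns; apply: gB; split.
  - split.
    + by exists 0, 0; rewrite mulr0 addr0.
    + move=> _ _ [a1 [r1 [A1 ->]]] [a2 [r2 [A2 ->]]].
      exists (a1 + a2), (r1 + r2); split; first exact: AD.
      by rewrite mulrDr addrACA.
    + move=> c _ [a1 [r1 [A1 ->]]]; exists (c * a1), (c * r1); split; first exact: AM.
      by rewrite mulrDr mulrCA.
  - by move=> a Ja; exists a, 0; rewrite mulr0 addr0; split => //; apply: JA.
  - by move=> z Bz Sz; apply: ns; exists z.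
have [s1 [Ss1 [a1 [r1 [A1 e1]]]]] := meet _ nu.
have [s2 [Ss2 [a2 [r2 [A2 e2]]]]] := meet _ nv.
apply: (AS (s1 * s2)); last exact: SM.
have -> : s1 * s2 = a1 * s2 + (a2 * (u * r1) + (u * v) * (r1 * r2)).
  by rewrite e1 e2; ring.
apply: (AD); first by rewrite mulrC; apply: (AM).
apply: (AD); first by rewrite mulrC; apply: (AM).
by rewrite mulrC; apply: (AM).
Qed.
End Zprime.
Section QuotMod.
Context (R : comNzRingType) (x : R).

Definition xI : {pred R} := fun a => `[< exists t, a = x * t >].

Lemma xIP a : reflect (exists t, a = x * t) (a \in xI).
Proof. exact: asboolP. Qed.

Lemma xI_zmod : zmod_closed xI.
Proof.
split; first by apply/xIP; exists 0; rewrite mulr0.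
move=> a b /xIP[s ->] /xIP[t ->]; apply/xIP; exists (s - t); ring.
Qed.

HB.instance Definition _ := GRing.isZmodClosed.Build R xI xI_zmod.

Import Quotient.
Definition QM := Quotient.quot xI.
HB.instance Definition _ := GRing.Zmodule.on QM.

Definition qscale (r : R) (q : QM) : QM := \pi_QM (r * repr q).

Lemma qscale_pi r a : qscale r (\pi_QM a) = \pi_QM (r * a).
Proof.
rewrite /qscale; apply/eqmodP; change (r * repr (\pi_QM a) - r * a \in xI).
rewrite -mulrBr.
have : \pi_QM (repr (\pi_QM a)) = \pi_QM a :> QM by rewrite reprK.
move/eqmodP; change (repr (\pi_QM a) - a \in xI -> r * (repr (\pi_QM a) - a) \in xI).
move=> /xIP[t ->]; apply/xIP; by exists (r * t); rewrite mulrCA.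
Qed.

Lemma piD a b : \pi_QM (a + b) = \pi_QM a + \pi_QM b :> QM.
Proof. exact: Quotient.pi_add. Qed.

Lemma pi0 : \pi_QM 0 = 0 :> QM.
Proof. exact: (@pi_zeror _ _ _ _ _ QM). Qed.

Lemma qscaleA a b v : qscale a (qscale b v) = qscale (a * b) v.
Proof. move: v; apply: (@quotW _ QM) => v. by rewrite !qscale_pi mulrA. Qed.

Lemma qscale1 : left_id 1 qscale.
Proof. by apply: (@quotW _ QM) => v; rewrite qscale_pi mul1r. Qed.

Lemma qscaleDr : right_distributive qscale +%R.
Proof.
move=> a u v; move: u v; apply: (@quotW _ QM) => u; apply: (@quotW _ QM) => v.
by rewrite -piD !qscale_pi -piD mulrDr.
Qed.

Lemma qscaleDl v : {morph qscale^~ v : a b / a + b}.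
Proof. by move=> a b; move: v; apply: (@quotW _ QM) => v; rewrite !qscale_pi -piD mulrDl. Qed.

HB.instance Definition _ := GRing.Zmodule_isLmodule.Build R QM
  qscaleA qscale1 qscaleDr qscaleDl.

Lemma QM_x (q : QM) : x *: q = 0.
Proof.
move: q; apply: (@quotW _ QM) => q; rewrite /GRing.scale /= qscale_pi.
rewrite -pi0; apply/eqmodP; change (x * q - 0 \in xI); rewrite subr0.
by apply/xIP; exists q.
Qed.

Lemma QM_one : \pi_QM 1 = 0 -> unit_elt x.
Proof.
rewrite -pi0 => /eqmodP; change (1 - 0 \in xI -> unit_elt x); rewrite subr0 => /xIP[t e].
by exists t.
Qed.
End QuotMod.

Lemma te_fst_exp (R : comNzRingType) (M : lmodType R) (a : R ∝ M) n :
  (a ^+ n).1 = a.1 ^+ n.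
Proof.
elim: n => [|n IH]; first by rewrite !expr0.
by rewrite !exprS -IH.
Qed.

Lemma te_sq0 (R : comNzRingType) (M : lmodType R) (a : R ∝ M) :
  a.1 = 0 -> a * a = 0.
Proof.
case: a => r m /= ->; rewrite /GRing.mul /= /te_mul /= mul0r !scale0r addr0.
by [].
Qed.

Theorem mainTheorem13 (R : comNzRingType) :
  (unique_prime_ideal R <->
     (forall x : R, ~ nilpotent_elt x <-> unit_elt x)) /\
  ((forall x : R, ~ nilpotent_elt x <-> unit_elt x) <->
     (forall M : lmodType R, semi_complemented (triv_ext M))).
Proof.
split; split.
- move=> [P [Pp Pu]] x; split; last exact: unit_not_nil.
  move=> nx; apply: contrapT => nu.
  have [Q1 [Q1p _ Q1S]] : exists Q, [/\ is_prime_ideal Q, (forall a, a = 0 -> Q a)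
      & (forall a, Q a -> ~ exists n, a = x ^+ n)].
    apply: exists_prime_avoid.
    + by exists 0%N; rewrite expr0.
    + by move=> a b [m ->] [n ->]; exists (m + n)%N; rewrite exprD.
    + split => //; first by move=> u v -> ->; rewrite addr0.
      by move=> a u ->; rewrite mulr0.
    + by move=> a -> [n e]; apply: nx; exists n; rewrite -e.
  have [Q2 [Q2p Q2J _]] : exists Q, [/\ is_prime_ideal Q,
      (forall a, (exists t, a = x * t) -> Q a) & (forall a, Q a -> ~ a = 1)].
    apply: exists_prime_avoid.
    + by [].
    + by move=> a b -> ->; rewrite mulr1.
    + split.
      * by exists 0; rewrite mulr0.
      * by move=> u v [s ->] [t ->]; exists (s + t); rewrite mulrDr.
      * by move=> a u [t ->]; exists (a * t); rewrite mulrCA.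
    + by move=> a [t e] e1; apply: nu; exists t; rewrite -e e1.
  have Q2x : Q2 x by apply: Q2J; exists 1; rewrite mulr1.
  have Px : P x := (Pu Q2 Q2p x).1 Q2x.
  apply: (Q1S x); last by exists 1%N; rewrite expr1.
  exact: (Pu Q1 Q1p x).2.
- move=> H2; exists (@nilpotent_elt R); split.
    split.
    + split.
      * by exists 1%N; rewrite expr1.
      * by move=> u v [a ua] [b vb]; exists (a + b)%N; apply: nilD.
      * by move=> a u [n un]; exists n; rewrite exprMn un mulr0.
    + by apply: unit_not_nil; exists 1; rewrite mulr1.
    + move=> u v nuv; apply: contrapT => /not_orP [nu nv].
      exact: (unit_not_nil (unitM ((H2 u).1 nu) ((H2 v).1 nv)) nuv).
  move=> Q [[Q0 QD QM] Q1 Qpr] x; split.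
    move=> Qx; apply: contrapT => nx; have [y xy] := (H2 x).1 nx.
    by apply: Q1; rewrite -xy mulrC; apply: QM.
  move=> [n xn]; have : Q (x ^+ n) by rewrite xn.
  elim: n {xn} => [|n IH]; first by rewrite expr0 => /Q1.
  by rewrite exprS => /Qpr [//|]; apply: IH.
- move=> H2 M [r m] nx.
  have nr : ~ nilpotent_elt r.
    move=> [n rn]; apply: nx; exists (n * 2)%N; rewrite exprM expr2 te_sq0 //.
    by rewrite te_fst_exp.
  have [s rs] := (H2 r).1 nr.
  exists 0; split; first by rewrite mulr0.
  rewrite addr0 => -[a b] e.
  have e1 : r * a = 0 := congr1 fst e.
  have e2 : r *: b + a *: m = 0 := congr1 snd e.
  have ha : a = 0 by rewrite -[a]mul1r -rs mulrAC e1 mul0r.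
  subst a; move: e2; rewrite scale0r addr0 => e2.
  have hb : b = 0 by rewrite -[b]scale1r -rs mulrC -scalerA e2 scaler0.
  by rewrite hb.
- move=> H3 x; split; last exact: unit_not_nil.
  move=> nx; apply: QM_one.
  have [] := H3 (QM x) ((x, \pi_(QM x) 1) : R ∝ QM x).
    move=> [n e]; apply: nx; exists n.
    by have := congr1 fst e; rewrite te_fst_exp.
  move=> [y n] [e reg].
  have e2 : x *: n + y *: (\pi_(QM x) 1 : QM x) = 0 := congr1 snd e.
  move: e2; rewrite QM_x add0r => e2.
  have := reg ((0, \pi_(QM x) 1) : R ∝ QM x).
  have -> : ((x, \pi_(QM x) 1) + (y, n) : R ∝ QM x) * (0, \pi_(QM x) 1) = 0.
    rewrite /GRing.mul /= /te_mul /= mulr0 scale0r addr0.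
    by rewrite scalerDl QM_x e2 addr0.
  by move=> /(_ erefl) /(congr1 snd).
Qed.
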